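(* Let $I=(N,O,\succsim)$ be a general instance and $p$ a generalized deterministic matching for $I$, with associated deterministic matching $p'$ for the associated instance $I'=(N',O',\succsim')$. Then $p$ has no envy, is individually rational and is non-wasteful if and only if $p'$ is weakly stable.
   Context: General instance: $N=\{1,\dots,n\}$ is a set of agents and $O=\{o_1,\dots,o_m\}$ a set of objects ($m,n\ge1$ arbitrary); $\emptyset$ denotes the null object (being unmatched). Each agent $i$ has a weak order $\succsim_i$ over $O\cup\{\emptyset\}$ and each object $o$ a weak order $\succsim_o$ over $N\cup\{\emptyset\}$, such that for each $(i,o)$ either $o\succ_i\emptyset$ or $\emptyset\succ_i o$, and either $i\succ_o\emptyset$ or $\emptyset\succ_o i$. $o$ is acceptable to $i$ if $o\succ_i\emptyset$, $i$ is acceptable to $o$ if $i\succ_o\emptyset$; $(i,o)$ is an acceptable pair if both hold. A generalized random matching is an $n\times m$ matrix $p$ with $p(i,o)\ge0$, $\sum_{o}p(i,o)\le1$ for each $i$, $\sum_i p(i,o)\le1$ for each $o$; it is deterministic if all entries are in $\{0,1\}$. $p$ has no envy if there exist no $i,j\in N$, $o\in O$ with $o\succ_i\emptyset$, $\sum_{o':o'\succsim_i o}p(i,o')=0$, $p(j,o)=1$ and $i\succ_o j$. $p$ is non-wasteful if there is no acceptable pair $(i,o)$ with $\sum_{o':o'\succsim_i o}p(i,o')<1$ and $\sum_{j\in N}p(j,o)<1$. $p$ is individually rational if $p(i,o)=0$ whenever $o$ is unacceptable to $i$ or $i$ is unacceptable to $o$. Associated instance: $D=\{d_1,\dots,d_m\}$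 (dummy agents), $\Phi=\{\phi_1,\dots,\phi_n\}$ (null objects), $N'=N\cup D$, $O'=O\cup\Phi$. Weak orders $\succsim'$ (blocks listed from best to worst, consecutive blocks strictly ordered): for $i\in N$: the objects acceptable to $i$ ordered by $\succsim_i$, then $\phi_i$, then $\phi_k$ ($k\ne i$) in increasing index, then the objects unacceptable to $i$ ordered by $\succsim_i$; for $o_j\in O$: agents acceptable to $o_j$ ordered by $\succsim_{o_j}$, then $d_j$, then $d_k$ ($k\neq j$) in increasing index, then agents unacceptable to $o_j$ ordered by $\succsim_{o_j}$; for $d_j$: $o_j$, then the other objects of $O$ in increasing index, then the null objects with $\phi_k\succsim'_{d_j}\phi_l$ iff $k\succsim_{o_j}l$; for $\phi_i$: $i$, then the other agents of $N$ in increasing index, then the dummy agents with $d_k\succsim'_{\phi_i}d_l$ iff $o_k\succsim_i o_l$. The associated matching $p'$ is the $(n+m)\times(n+m)$ matrix with $p'(i,o_j)=p(i,o_j)$, $p'(d_j,\phi_i)=p(i,o_j)$, $p'(i,\phi_i)=1-\sum_{o\in O}p(i,o)$, $p'(d_j,o_j)=1-\sum_{i\in N}p(i,o_j)$ and all other entries $0$. A deterministic matching $q$ for $I'$ is weakly stable if there are no $a,b\in N'$, $c,c'\in O'$ with $q(a,c')=1$, $q(b,c)=1$, $c\succ'_a c'$ and $a\succ'_c b$. *)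

(* Defs.v *)
From mathcomp Require Import all_boot all_order all_algebra.
Set Implicit Arguments. Unset Strict Implicit. Unset Printing Implicit Defensive.
Import Order.TTheory GRing.Theory Num.Theory.
Local Open Scope ring_scope.

(* Agents N = 'I_n, objects O = 'I_m, the null object is None. *)

Definition weak_order (T : Type) (r : rel T) := total r /\ transitive r.

Definition sp (T : Type) (r : rel T) : rel T := fun x y => r x y && ~~ r y x.

Section Defs.
Variables (n m : nat).
Variable pa : 'I_n -> rel (option 'I_m).
Variable po : 'I_m -> rel (option 'I_n).

Definition general_instance :=
  [/\ forall i, weak_order (pa i),
      forall o, weak_order (po o),
      forall i o, sp (pa i) (Some o) None \/ sp (pa i) None (Some o)
    & forall i o, sp (po o) (Some i) None \/ sp (po o) None (Some i)].

Definition acc_ag (i : 'I_n) (o : 'I_m) := sp (pa i) (Some o) None.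
Definition acc_ob (o : 'I_m) (i : 'I_n) := sp (po o) (Some i) None.
Definition unacc_ag (i : 'I_n) (o : 'I_m) := sp (pa i) None (Some o).
Definition unacc_ob (o : 'I_m) (i : 'I_n) := sp (po o) None (Some i).

Section Matchings.
Variable R : realFieldType.
Variable p : 'M[R]_(n, m).

Definition gen_random_matching :=
  [/\ forall i o, 0 <= p i o,
      forall i, \sum_(o < m) p i o <= 1
    & forall o, \sum_(i < n) p i o <= 1].

Definition deterministic := forall i o, p i o = 0 \/ p i o = 1.

Definition gen_deterministic_matching := gen_random_matching /\ deterministic.

Definition no_envy :=
  ~ exists (i j : 'I_n) (o : 'I_m),
      [/\ sp (pa i) (Some o) None,
          \sum_(o' < m | pa i (Some o') (Some o)) p i o' = 0,
          p j o = 1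
        & sp (po o) (Some i) (Some j)].

Definition non_wasteful :=
  ~ exists (i : 'I_n) (o : 'I_m),
      [/\ acc_ag i o, acc_ob o i,
          \sum_(o' < m | pa i (Some o') (Some o)) p i o' < 1
        & \sum_(j < n) p j o < 1].

Definition individually_rational :=
  forall i o, unacc_ag i o \/ unacc_ob o i -> p i o = 0.
End Matchings.

(* Associated instance: N' = N + D  ('I_n + 'I_m, inr j = d_j),
                        O' = O + Phi ('I_m + 'I_n, inr i = phi_i). *)
Definition agentT := ('I_n + 'I_m)%type.
Definition objT := ('I_m + 'I_n)%type.

(* lexicographic "blocks" ordering: smaller block is better, inside a block use w *)
Definition blockrel (T : Type) (bk : T -> nat) (w : rel T) : rel T :=
  fun x y => (bk x < bk y)%N || ((bk x == bk y) && w x y).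

Definition bkA (i : 'I_n) (c : objT) : nat :=
  match c with
  | inl o => if acc_ag i o then 0 else 3
  | inr k => if k == i then 1 else 2
  end%N.
Definition wA (i : 'I_n) : rel objT := fun c c' =>
  match c, c' with
  | inl o, inl o' => pa i (Some o) (Some o')
  | inr k, inr l => (k <= l)%N
  | _, _ => true
  end.

Definition bkD (j : 'I_m) (c : objT) : nat :=
  match c with
  | inl o => if o == j then 0 else 1
  | inr _ => 2
  end%N.
Definition wD (j : 'I_m) : rel objT := fun c c' =>
  match c, c' with
  | inl o, inl o' => (o <= o')%N
  | inr k, inr l => po j (Some k) (Some l)
  | _, _ => true
  end.

Definition bkO (j : 'I_m) (a : agentT) : nat :=
  match a with
  | inl i => if acc_ob j i then 0 else 3
  | inr k => if k == j then 1 else 2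
  end%N.
Definition wO (j : 'I_m) : rel agentT := fun a a' =>
  match a, a' with
  | inl i, inl i' => po j (Some i) (Some i')
  | inr k, inr l => (k <= l)%N
  | _, _ => true
  end.

Definition bkP (i : 'I_n) (a : agentT) : nat :=
  match a with
  | inl k => if k == i then 0 else 1
  | inr _ => 2
  end%N.
Definition wP (i : 'I_n) : rel agentT := fun a a' =>
  match a, a' with
  | inl k, inl l => (k <= l)%N
  | inr k, inr l => pa i (Some k) (Some l)
  | _, _ => true
  end.

Definition prefN' (a : agentT) : rel objT :=
  match a with
  | inl i => blockrel (bkA i) (wA i)
  | inr j => blockrel (bkD j) (wD j)
  end.

Definition prefO' (c : objT) : rel agentT :=
  match c with
  | inl j => blockrel (bkO j) (wO j)
  | inr i => blockrel (bkP i) (wP i)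
  end.

Definition assoc (R : realFieldType) (p : 'M[R]_(n, m)) (a : agentT) (c : objT) : R :=
  match a, c with
  | inl i, inl j => p i j
  | inr j, inr i => p i j
  | inl i, inr k => if k == i then 1 - \sum_(o < m) p i o else 0
  | inr j, inl k => if k == j then 1 - \sum_(i < n) p i j else 0
  end.

Definition weakly_stable (R : realFieldType) (q : agentT -> objT -> R) :=
  ~ exists (a b : agentT) (c c' : objT),
      [/\ q a c' = 1, q b c = 1, sp (prefN' a) c c' & sp (prefO' c) a b].
End Defs.

(* Main.v *)
Require Import Defs.
From mathcomp Require Import all_boot all_order all_algebra.
From mathcomp Require Import lra.
Set Implicit Arguments. Unset Strict Implicit. Unset Printing Implicit Defensive.
Import Order.TTheory GRing.Theory Num.Theory.
Local Open Scope ring_scope.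

Lemma sp_block (T : Type) (bk : T -> nat) (w : rel T) x y :
  sp (blockrel bk w) x y = (bk x < bk y)%N || ((bk x == bk y) && sp w x y).
Proof.
rewrite /sp /blockrel.
case: (ltngtP (bk x) (bk y)) => h //=; rewrite ?andbT ?andbF //.
Qed.

Lemma sp_irr (T : Type) (r : rel T) x : sp r x x = false.
Proof. by rewrite /sp; case: (r x x). Qed.

Lemma sp_trans_l (T : Type) (r : rel T) x y z :
  weak_order r -> sp r x y -> r y z -> sp r x z.
Proof.
move=> [_ tr] /andP [hxy nyx] hyz; apply/andP; split; first exact: tr hxy hyz.
apply/negP => hzx; by move/negP: nyx; apply; exact: tr hyz hzx.
Qed.

Lemma sp_r (T : Type) (r : rel T) x y : sp r x y -> r x y.
Proof. by case/andP. Qed.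

Lemma sp_asym (T : Type) (r : rel T) x y : sp r x y -> sp r y x = false.
Proof. by case/andP => h1 h2; rewrite /sp h1 andbF. Qed.

Lemma sp_tot (T : Type) (r : rel T) x y : weak_order r -> ~~ r x y -> sp r y x.
Proof.
move=> [tot _] h; rewrite /sp h andbT; by case/orP: (tot x y) => // h'; rewrite h' in h.
Qed.

Section Aux.
Variable R : realFieldType.

Lemma zo_cases k (f : 'I_k -> R) : (forall x, f x = 0 \/ f x = 1) ->
  \sum_x f x <= 1 ->
  (forall x, f x = 0) \/ exists x0, f x0 = 1 /\ forall x, x != x0 -> f x = 0.
Proof.
move=> hzo hs.
have f0 : forall x, 0 <= f x by move=> x; case: (hzo x) => ->; rewrite ?lexx ?ler01.
case: (pickP (fun x => f x == 1)) => [x0 /eqP h | h]; last first.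
  left=> x; case: (hzo x) => // h1; by move: (h x); rewrite h1 eq_refl.
right; exists x0; split=> // x nx; case: (hzo x) => // h1; exfalso.
move: hs; rewrite (bigD1 x0) //= (bigD1 x) //=.
set s := \sum_(i | _) _.
have : 0 <= s by apply: sumr_ge0 => i _.
rewrite h h1; lra.
Qed.

Lemma sum_one k (f : 'I_k -> R) x0 (P : pred 'I_k) :
  (forall x, x != x0 -> f x = 0) ->
  \sum_(x | P x) f x = if P x0 then f x0 else 0.
Proof.
move=> h; rewrite big_mkcond (bigD1 x0) //= big1 ?addr0 // => x nx.
by rewrite h //; case: (P x).
Qed.

Lemma sum_lt1 k (f : 'I_k -> R) (P : pred 'I_k) :
  (forall x, f x = 0 \/ f x = 1) -> \sum_x f x <= 1 ->
  \sum_(x | P x) f x < 1 -> \sum_(x | P x) f x = 0.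
Proof.
move=> hzo hs; case: (zo_cases hzo hs) => [h0 | [x0 [h1 h0]]].
  by move=> _; rewrite big1.
rewrite (sum_one P h0) h1; case: (P x0) => //; by rewrite ltxx.
Qed.

End Aux.

Theorem proposition20 (R : realFieldType) (n m : nat)
    (pa : 'I_n -> rel (option 'I_m)) (po : 'I_m -> rel (option 'I_n))
    (p : 'M[R]_(n, m)) :
  (0 < n)%N -> (0 < m)%N ->
  general_instance pa po ->
  gen_deterministic_matching p ->
  (no_envy pa po p /\ individually_rational pa po p /\ non_wasteful pa po p)
  <-> weakly_stable pa po (assoc p).
Proof.
move=> _ _ [woa woo accd accd'] [[p0 prow pcol] pdet].
have z1 : (0:R) = 1 -> False by move/eqP; rewrite eq_sym oner_eq0.
have rzo i : forall o, p i o = 0 \/ p i o = 1 := fun o => pdet i o.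
have czo o : forall i, p i o = 0 \/ p i o = 1 := fun i => pdet i o.
have row i := zo_cases (rzo i) (prow i).
have col o := zo_cases (czo o) (pcol o).
have rowone i o : p i o = 1 -> forall x, x != o -> p i x = 0.
  move=> h; case: (row i) => [z|[x0 [h1 h0]]]; first by rewrite z in h; case: (z1 h).
  case: (eqVneq o x0) => [->//|no]; by rewrite h0 // in h; case: (z1 h).
have qAP i k : assoc p (inl i) (inr k) = 1 -> k = i /\ forall o, p i o = 0.
  rewrite /=; case: eqP => [-> h|_ /z1] //; split=>//.
  have hs : \sum_o p i o = 0 by lra.
  move=> o; apply: (psumr_eq0P _ hs) => // x _; exact: p0.
have qDO j k : assoc p (inr j) (inl k) = 1 -> k = j /\ forall i, p i j = 0.
  rewrite /=; case: eqP => [-> h|_ /z1] //; split=>//.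
  have hs : \sum_i p i j = 0 by lra.
  move=> i; apply: (psumr_eq0P _ hs) => // x _; exact: p0.
split.
- move=> [ne [ir nw]] [a [b [c [c' [h1 h2 h3 h4]]]]].
  have irA i o : p i o = 1 -> acc_ag pa i o /\ acc_ob po o i.
    move=> h; split.
      by case: (accd i o) => // hu; exfalso; apply: z1; rewrite -h; symmetry; apply: ir; left.
    by case: (accd' i o) => // hu; exfalso; apply: z1; rewrite -h; symmetry; apply: ir; right.
  have keyO : forall i o, acc_ag pa i o ->
      \sum_(o' < m | pa i (Some o') (Some o)) p i o' = 0 ->
      forall b, assoc p b (inl o) = 1 -> sp (prefO' pa po (inl o)) (inl i) b -> False.
    move=> i o ha hs [j|k] hb hsp.
    + have [_ hj] := irA j o hb.
      move: hsp; rewrite /= sp_block /= hj /=; case: ifP => hi //= hsp.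
      by apply: ne; exists i, j, o; split.
    + case/qDO: hb => ek hz; subst k.
      move: hsp; rewrite /= sp_block /= eq_refl; case: ifP => hi //= _.
      apply: nw; exists i, o; split => //; first by rewrite hs ltr01.
      by rewrite big1 ?ltr01.
  case: a h1 h3 h4 => [i|j] h1 h3 h4.
  + case: c' h1 h3 => [o'|k] h1 h3.
    * have [ha' _] := irA i o' h1. have hz := rowone i o' h1.
      case: c h2 h3 h4 => [o|k] h2 h3 h4.
      - move: h3; rewrite /= sp_block /= ha'; case: ifP => ho //= hsp.
        apply: (keyO i o ho _ b h2 h4).
        rewrite (@sum_one _ _ (fun x => p i x) o' (fun x => pa i (Some x) (Some o)) hz); by case/andP: hsp => _ /negbTE; rewrite /= => ->.
      - by move: h3; rewrite /= sp_block /= ha'; case: ifP.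
    * case/qAP: h1 => ek hz; subst k.
      case: c h2 h3 h4 => [o|k] h2 h3 h4.
      - move: h3; rewrite /= sp_block /= eq_refl; case: ifP => ho // _.
        by apply: (keyO i o ho _ b h2 h4); rewrite big1.
      - move: h3; rewrite /= sp_block /= eq_refl; case: eqP => [->|] //=.
        by rewrite sp_irr.
  + case: c' h1 h3 => [k|i] h1 h3.
    * case/qDO: h1 => ek _; subst k.
      move: h3; rewrite /= sp_block /= eq_refl.
      case: c h2 h4 => [o|k] h2 h4 //=.
      by case: ifP => [/eqP -> | _] //=; rewrite sp_irr.
    * case: c h2 h3 h4 => [o|k] h2 h3 h4.
      - case: b h2 h4 => [i'|k] h2 h4.
        + have [_ hacc] := irA i' o h2.
          by move: h4; rewrite /= sp_block /= hacc; case: ifP.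
        + case/qDO: h2 => ek _; subst.
          move: h4; rewrite /= sp_block /= eq_refl; case: eqP => [->|] //=.
          by rewrite sp_irr.
      - move: h3; rewrite /= sp_block /= => h3.
        case: b h2 h4 => [l|j'] h2 h4.
        + case/qAP: h2 => ek _; subst.
          by move: h4; rewrite /= sp_block /= eq_refl.
        + move: h4; rewrite /= sp_block /= => h4.
          have [ha _] := irA k j' h2.
          apply: ne; exists k, i, j; split => //.
            exact: sp_trans_l (woa k) h4 (sp_r ha).
          rewrite (@sum_one _ _ (fun x => p k x) j' (fun x => pa k (Some x) (Some j)) (rowone k j' h2)); by case/andP: h4 => _ /negbTE; rewrite /= => ->.
- move=> ws.
  have prefm : forall i o, acc_ag pa i o ->
      \sum_(o' < m | pa i (Some o') (Some o)) p i o' = 0 ->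
      exists c', assoc p (inl i) c' = 1 /\ sp (prefN' pa po (inl i)) (inl o) c'.
    move=> i o ha hs; case: (row i) => [hz | [o0 [h1 h0]]].
    + exists (inr i); split; first by rewrite /= eq_refl big1 ?subr0.
      by rewrite /= sp_block /= ha eq_refl.
    + exists (inl o0); split => //.
      move: hs; rewrite (sum_one _ h0) h1; case: ifP => [_ h | hn _].
        by case: (z1 (esym h)).
      rewrite /= sp_block /= ha; case: ifP => ho0 //=.
      apply: sp_tot (woa i) _; by rewrite hn.
  split; [|split].
  + move=> [i [j [o [ha hs hj hpo]]]]. apply: ws.
    have [c' [hc' hsp]] := prefm i o ha hs.
    exists (inl i), (inl j), (inl o), c'; split => //.
    rewrite /= sp_block /=; case: ifP => hai; case: ifP => haj //=.
    have : acc_ob po o i by exact: sp_trans_l (woo o) hpo (sp_r haj).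
    by rewrite hai.
  + move=> i o [hu|hu]; case: (pdet i o) => // h1; exfalso; apply: ws.
    * have nA : acc_ag pa i o = false by rewrite /acc_ag (sp_asym hu).
      exists (inl i), (inr o), (inr i), (inl o); split => //.
        by rewrite /= sp_block /= nA eq_refl.
      by rewrite /= sp_block /= eq_refl.
    * have nA : acc_ob po o i = false by rewrite /acc_ob (sp_asym hu).
      exists (inr o), (inl i), (inl o), (inr i); split => //.
        by rewrite /= sp_block /= eq_refl.
      by rewrite /= sp_block /= nA eq_refl.
  + move=> [i [o [ha hb hs hc]]]. apply: ws.
    have hs0 := sum_lt1 (rzo i) (prow i) hs.
    have hc0 := sum_lt1 (czo o) (pcol o) hc.
    have [c' [hc' hsp]] := prefm i o ha hs0.
    exists (inl i), (inr o), (inl o), c'; split => //.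
      by rewrite /= eq_refl hc0 subr0.
    by rewrite /= sp_block /= hb eq_refl.
Qed.
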